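(* For variables $a,b,\alpha,\beta$ and any natural number $n\ge1$, \[ \frac{1}{\lfloor n/2\rfloor!}\Big(\alpha\frac{\partial}{\partial a}+\beta\frac{\partial}{\partial b}\Big)^{\lfloor n/2\rfloor}\Psi(a,b,n)=\Psi(\alpha,\beta,n),\qquad \frac{1}{\lfloor (n-1)/2\rfloor!}\Big(\alpha\frac{\partial}{\partial a}+\beta\frac{\partial}{\partial b}\Big)^{\lfloor (n-1)/2\rfloor}\Phi(a,b,n)=\Phi(\alpha,\beta,n), \] where $\alpha,\beta$ are treated as constants under $\partial/\partial a,\partial/\partial b$.
   Context: $\delta(m)=1$ for $m$ odd, $0$ for $m$ even; $\lfloor\cdot\rfloor$ is the floor. $\Psi(a,b,n)$, $\Phi(a,b,n)$ are the polynomials in $a,b$ defined by $\Psi(a,b,0)=2$, $\Psi(a,b,1)=1$, $\Psi(a,b,n+1)=(2a-b)^{\delta(n)}\Psi(a,b,n)-a\Psi(a,b,n-1)$ and $\Phi(a,b,0)=0$, $\Phi(a,b,1)=1$, $\Phi(a,b,n+1)=(2a-b)^{\delta(n+1)}\Phi(a,b,n)-a\Phi(a,b,n-1)$ for $n\ge1$. *)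

(* Defs.v *)
From mathcomp Require Import all_boot all_algebra.
From mathcomp Require Import mpoly.
Set Implicit Arguments. Unset Strict Implicit. Unset Printing Implicit Defensive.
Import GRing.Theory.
Local Open Scope ring_scope.

(* delta(m) = 1 if m odd, 0 if m even; (2a-b)^delta(m) *)
Definition coefd {R : ringType} (a b : R) (m : nat) : R :=
  if odd m then 2 * a - b else 1.

(* psi_pair a b m = (Psi(a,b,m), Psi(a,b,m+1)) *)
Fixpoint psi_pair {R : ringType} (a b : R) (m : nat) : R * R :=
  match m with
  | 0 => (2, 1)
  | m'.+1 => let: (x, y) := psi_pair a b m' in
             (y, coefd a b m'.+1 * y - a * x)
  end.
Definition Psi {R : ringType} (a b : R) (n : nat) : R := (psi_pair a b n).1.

(* phi_pair a b m = (Phi(a,b,m), Phi(a,b,m+1));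
   Phi(n+1) = (2a-b)^delta(n+1) Phi(n) - a Phi(n-1) *)
Fixpoint phi_pair {R : ringType} (a b : R) (m : nat) : R * R :=
  match m with
  | 0 => (0, 1)
  | m'.+1 => let: (x, y) := phi_pair a b m' in
             (y, coefd a b m'.+2 * y - a * x)
  end.
Definition Phi {R : ringType} (a b : R) (n : nat) : R := (phi_pair a b n).1.

Notation P4 := {mpoly rat[4]}.
Definition va : P4 := 'X_(@Ordinal 4 0 isT).
Definition vb : P4 := 'X_(@Ordinal 4 1 isT).
Definition valpha : P4 := 'X_(@Ordinal 4 2 isT).
Definition vbeta : P4 := 'X_(@Ordinal 4 3 isT).

Definition Dop (p : P4) : P4 :=
  valpha * mderiv (@Ordinal 4 0 isT) p + vbeta * mderiv (@Ordinal 4 1 isT) p.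

(* Main.v *)
Require Import Defs.
From mathcomp Require Import all_boot all_algebra.
From mathcomp Require Import mpoly.
From mathcomp Require Import ring.
Set Implicit Arguments. Unset Strict Implicit. Unset Printing Implicit Defensive.
Import GRing.Theory Num.Theory.
Local Open Scope ring_scope.

Lemma mderivXX (i j : 'I_4) : mderiv i ('X_j : P4) = (j == i)%:R.
Proof.
rewrite mderivX mnm1E; case: eqP => [->|_]; last by rewrite scale0r.
have -> : (U_(i) - U_(i))%MM = 0%MM by apply/mnmP => k; rewrite mnmBE subnn mnm0E.
by rewrite scale1r mpolyX0.
Qed.

Lemma DopD p q : Dop (p + q) = Dop p + Dop q.
Proof. rewrite /Dop !mderivD; ring. Qed.
Lemma DopN p : Dop (- p) = - Dop p.
Proof. rewrite /Dop !mderivN; ring. Qed.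
Lemma DopM p q : Dop (p * q) = Dop p * q + p * Dop q.
Proof. rewrite /Dop !mderivM; ring. Qed.
Lemma DopMn p k : Dop (p *+ k) = Dop p *+ k.
Proof. rewrite /Dop !mderivMn; by rewrite mulrnDl !mulrnAr. Qed.
Lemma Dopva : Dop va = valpha.
Proof. by rewrite /Dop /va !mderivXX /= mulr1 mulr0 addr0. Qed.
Lemma Dopvb : Dop vb = vbeta.
Proof. by rewrite /Dop /vb !mderivXX /= mulr1 mulr0 add0r. Qed.
Lemma Dopvalpha : Dop valpha = 0.
Proof. by rewrite /Dop /valpha !mderivXX /= !mulr0 addr0. Qed.
Lemma Dopvbeta : Dop vbeta = 0.
Proof. by rewrite /Dop /vbeta !mderivXX /= !mulr0 addr0. Qed.
Lemma Dop1 : Dop 1 = 0.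
Proof. by rewrite /Dop -mpolyX0 !mderivX !mnm0E !scale0r !mulr0 addr0. Qed.

Lemma iterD j p q : iter j Dop (p + q) = iter j Dop p + iter j Dop q.
Proof. by elim: j => //= j ->; rewrite DopD. Qed.
Lemma iterN j p : iter j Dop (- p) = - iter j Dop p.
Proof. by elim: j => //= j ->; rewrite DopN. Qed.
Lemma iterB j p q : iter j Dop (p - q) = iter j Dop p - iter j Dop q.
Proof. by rewrite iterD iterN. Qed.

Lemma iterM u p j : Dop (Dop u) = 0 ->
  iter j Dop (u * p) = u * iter j Dop p + (Dop u * iter j.-1 Dop p) *+ j.
Proof.
move=> h; elim: j => [|j IH]; first by rewrite /= mulr0n addr0.
rewrite iterS IH DopD DopM DopMn DopM h mul0r add0r.
case: j {IH} => [|j] /=; first by rewrite !mulr0n !addr0 mulr1n addrC.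
by rewrite [in RHS]mulrS [RHS]addrCA addrA.
Qed.

Definition Good (p g : P4) (k : nat) :=
  (forall j, (k < j)%N -> iter j Dop p = 0) /\ iter k Dop p = g *+ k`!.

Lemma DDva : Dop (Dop va) = 0. Proof. by rewrite Dopva Dopvalpha. Qed.

Lemma case1 p0 p1 g0 g1 c m : Dop (Dop c) = 0 -> Good p0 g0 m -> Good p1 g1 m ->
  Good (c * p1 - va * p0) (Dop c * g1 - valpha * g0) m.+1.
Proof.
move=> hc [z0 t0] [z1 t1]; split.
  move=> [|j] // hj; have hj' : (m < j)%N := hj; have hj2 : (m < j.+1)%N := ltnW hj'.
  rewrite iterB !iterM // ?DDva // (z0 j.+1) ?(z1 j.+1) ?(z0 j) ?(z1 j) //.
  by rewrite !mulr0 mul0rn !addr0 subrr.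
rewrite iterB !iterM // ?DDva // (z0 m.+1) // (z1 m.+1) //= t0 t1 Dopva factS.
by rewrite !mulr0 !add0r !mulrnAr -!mulrnA mulrnBl (mulnC m.+1).
Qed.

Lemma case2 p0 p1 g0 g1 m : Good p0 g0 m -> Good p1 g1 m.+1 ->
  Good (p1 - va * p0) (g1 - valpha * g0) m.+1.
Proof.
move=> [z0 t0] [z1 t1]; split.
  move=> [|j] // hj; have hj' : (m < j)%N := hj; have hj2 : (m < j.+1)%N := ltnW hj'.
  rewrite iterB !iterM // ?DDva // (z0 j.+1) ?(z1 j.+1) ?(z0 j) //.
  by rewrite !mulr0 mul0rn !addr0 subrr.
rewrite iterB iterM // ?DDva // (z0 m.+1) // succnK t0 t1 Dopva factS.
by rewrite !mulr0 !add0r !mulrnAr -!mulrnA mulrnBl (mulnC m.+1).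
Qed.

Lemma goodE p g k : Good p g k -> ((k`!%:R : rat)^-1 *: iter k Dop p = g).
Proof.
move=> [_ ->]; rewrite -scaler_nat scalerA mulVf ?scale1r //.
by rewrite pnatr_eq0 -lt0n fact_gt0.
Qed.

Lemma Dop0 : Dop 0 = 0.
Proof. by rewrite /Dop !mderiv0 !mulr0 addr0. Qed.
Lemma iter0 j : iter j Dop 0 = 0.
Proof. by elim: j => //= j ->; rewrite Dop0. Qed.
Lemma Dop2 : Dop 2 = 0.
Proof. by rewrite DopD Dop1 addr0. Qed.

Lemma good_const (x : P4) : Dop x = 0 -> Good x x 0.
Proof.
move=> h; split; last by rewrite /= mulr1n.
by case=> // j _; rewrite iterSr h iter0.
Qed.

Lemma Dopc : Dop (2 * va - vb) = 2 * valpha - vbeta.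
Proof. by rewrite DopD DopN DopM Dop2 Dopva Dopvb mul0r add0r. Qed.
Lemma DDc : Dop (Dop (2 * va - vb)) = 0.
Proof. rewrite Dopc DopD DopN DopM Dop2 Dopvalpha Dopvbeta; by rewrite !(mul0r, mulr0, addr0, oppr0). Qed.

Lemma pp_step {R : ringType} (a b : R) n :
  psi_pair a b n.+1 = ((psi_pair a b n).2, coefd a b n.+1 * (psi_pair a b n).2 - a * (psi_pair a b n).1).
Proof. by rewrite /=; case: psi_pair. Qed.
Lemma psi_rec {R : ringType} (a b : R) n :
  Psi a b n.+2 = coefd a b n.+1 * Psi a b n.+1 - a * Psi a b n.
Proof. by rewrite /Psi /=; case: psi_pair. Qed.
Lemma fp_step {R : ringType} (a b : R) n :
  phi_pair a b n.+1 = ((phi_pair a b n).2, coefd a b n.+2 * (phi_pair a b n).2 - a * (phi_pair a b n).1).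
Proof. by rewrite /=; case: phi_pair. Qed.
Lemma phi_rec {R : ringType} (a b : R) n :
  Phi a b n.+2 = coefd a b n.+2 * Phi a b n.+1 - a * Phi a b n.
Proof. by rewrite /Phi /=; case: phi_pair. Qed.

Lemma coefd_odd {R : ringType} (a b : R) m : coefd a b (m.*2).+1 = 2 * a - b.
Proof. by rewrite /coefd /= odd_double. Qed.
Lemma coefd_even {R : ringType} (a b : R) m : coefd a b (m.*2) = 1.
Proof. by rewrite /coefd odd_double. Qed.

Lemma psi_good m : Good (Psi va vb m.*2) (Psi valpha vbeta m.*2) m /\
                   Good (Psi va vb (m.*2).+1) (Psi valpha vbeta (m.*2).+1) m.
Proof.
elim: m => [|m [G0 G1]].
  split; apply: good_const; rewrite /Psi /=; [exact: Dop2 | exact: Dop1].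
have G2 : Good (Psi va vb (m.+1).*2) (Psi valpha vbeta (m.+1).*2) m.+1.
  rewrite doubleS !psi_rec !coefd_odd -Dopc; exact: case1 DDc G0 G1.
split => //.
rewrite doubleS (psi_rec va vb (m.*2).+1) (psi_rec valpha vbeta (m.*2).+1) -doubleS.
rewrite !coefd_even !mul1r; exact: case2 G1 G2.
Qed.

Lemma phi_good m : Good (Phi va vb (m.*2).+1) (Phi valpha vbeta (m.*2).+1) m /\
                   Good (Phi va vb (m.*2).+2) (Phi valpha vbeta (m.*2).+2) m.
Proof.
elim: m => [|m [G0 G1]].
  have e (a b : P4) : Phi a b 1 = 1 /\ Phi a b 2 = 1.
    by rewrite /Phi /= /coefd /= mulr1 mulr0 subr0.
  rewrite !(proj1 (e _ _)) !(proj2 (e _ _)); split; apply: good_const; exact: Dop1.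
have G2 : Good (Phi va vb ((m.+1).*2).+1) (Phi valpha vbeta ((m.+1).*2).+1) m.+1.
  rewrite doubleS (phi_rec va vb (m.*2).+1) (phi_rec valpha vbeta (m.*2).+1) -[(m.*2).+3]/((m.+1).*2).+1 !coefd_odd -Dopc; exact: case1 DDc G0 G1.
split => //.
rewrite doubleS (phi_rec va vb (m.*2).+2) (phi_rec valpha vbeta (m.*2).+2).
rewrite -[(m.*2).+4]/((m.+2).*2) !coefd_even !mul1r; exact: case2 G1 G2.
Qed.

Theorem theorem8p5 (n : nat) : (1 <= n)%N ->
  ((n./2)`!%:R)^-1 *: iter n./2 Dop (Psi va vb n) = Psi valpha vbeta n /\
  (((n.-1)./2)`!%:R)^-1 *: iter (n.-1)./2 Dop (Phi va vb n) = Phi valpha vbeta n.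
Proof.
move=> hn; rewrite -[n]odd_double_half in hn *.
case: (odd n) hn => /= hn.
  rewrite uphalf_double doubleK; split; apply: goodE.
    exact: (proj2 (psi_good _)).
  exact: (proj1 (phi_good _)).
case: (n./2) hn => [|m] // _.
rewrite add0n doubleK; split; apply: goodE; first exact: (proj1 (psi_good _)).
rewrite doubleS /= uphalf_double; exact: (proj2 (phi_good _)).
Qed.
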